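(* Let $N=2^n$ and $0\le i<j<N$. Suppose there exists a finite sequence of integers $a_0,a_1,\ldots,a_\ell\in[0,N)$, $\ell\ge0$, with $a_0=i$, $a_\ell=j$, such that for every $m\in[0,\ell)$ one of the following holds: (1) there exist $0\le u<w<n$ with $b_k(a_m)=b_k(a_{m+1})$ for all $k\in[0,n)\setminus\{u,w\}$, $b_u(a_m)=b_w(a_{m+1})=1$ and $b_w(a_m)=b_u(a_{m+1})=0$; or (2) $b_k(a_m)\le b_k(a_{m+1})$ for all $k\in[0,n)$. Then exactly one of the following holds: (a) $\mathrm{w}(\mathbf{g}_j)>\mathrm{w}(\mathbf{g}_i)$, i.e. the first nonzero component of $(S^{(n)}_{j,w})_w$ is at a larger weight than that of $(S^{(n)}_{i,w})_w$; or (b) $\mathrm{w}(\mathbf{g}_j)=\mathrm{w}(\mathbf{g}_i)$ and $s^{(n)}_i>s^{(n)}_j$.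
   Context: All vectors are binary (over $GF(2)$), indices are zero-based. Let $G_N=\begin{pmatrix}1&0\\1&1\end{pmatrix}^{\otimes n}$ for $N=2^n$, with rows $\mathbf{g}_0,\ldots,\mathbf{g}_{N-1}$; $\mathrm{w}(\cdot)$ is Hamming weight. $S^{(n)}_{i,w}$ is the number of words of weight $w$ in $\mathbf{g}_i+\langle\mathbf{g}_{i+1},\ldots,\mathbf{g}_{N-1}\rangle$, and $s^{(n)}_i:=S^{(n)}_{i,\mathrm{w}(\mathbf{g}_i)}$ (the first nonzero entry of $(S^{(n)}_{i,w})_w$). For $i\in[0,N)$, $b_j(i)$ denotes the $j$-th bit of $i$, i.e. $i=\sum_{j=0}^{n-1}b_j(i)2^j$. (The existence of such a sequence is the sufficient condition from the literature for the synthetic channel $W_N^{(i)}$ to be stochastically degraded with respect to $W_N^{(j)}$.) *)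

(* Defs.v *)
From HB Require Import structures.
From mathcomp Require Import all_boot all_order all_algebra.
Set Implicit Arguments. Unset Strict Implicit. Unset Printing Implicit Defensive.
Import GRing.Theory.

(* Kernel F = [[1,0],[1,1]] : F a b = 1 iff b <= a (a, b in {0,1}). *)
Definition kernF (a b : nat) : bool := (b <= a)%N.

(* Entry (i,k) of the Kronecker power F^{(x) n}, built recursively as
   G_{n+1} = F (x) G_n, i.e. (A (x) B)[i][k] = A[i/d][k/d] * B[i%d][k%d],
   d = dim B = 2^n. *)
Fixpoint kronG (n i k : nat) : bool :=
  match n with
  | 0 => true
  | n'.+1 => kernF (i %/ 2 ^ n') (k %/ 2 ^ n') && kronG n' (i %% 2 ^ n') (k %% 2 ^ n')
  end.

Local Open Scope ring_scope.

Definition grow (n i : nat) : 'rV['F_2]_(2 ^ n) :=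
  \row_(k < 2 ^ n) (kronG n i k)%:R.

Definition hw (N : nat) (v : 'rV['F_2]_N) : nat := #|[set k : 'I_N | v 0 k != 0]|.

(* The coset g_i + <g_{i+1}, ..., g_{N-1}> as a set of vectors. *)
Definition coset_i (n i : nat) : {set 'rV['F_2]_(2 ^ n)} :=
  (fun A : {set 'I_(2 ^ n)} => grow n i + \sum_(k in A) grow n k) @:
     [set A : {set 'I_(2 ^ n)} | A \subset [set k : 'I_(2 ^ n) | (i < k)%N]].

Definition S_ (n i w : nat) : nat := #|[set v in coset_i n i | hw v == w]|.

Definition s_ (n i : nat) : nat := S_ n i (hw (grow n i)).

Definition bit (j i : nat) : bool := odd (i %/ 2 ^ j).

Definition step (n x y : nat) : Prop :=
  (exists u w : nat, [/\ (u < w < n)%N,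
      (forall k, (k < n)%N -> k != u -> k != w -> bit k x = bit k y),
      bit u x && bit w y & ~~ bit w x && ~~ bit u y])
  \/ (forall k, (k < n)%N -> (bit k x <= bit k y)%N).

(* Main.v *)
Require Import Defs.
From mathcomp Require Import all_boot all_order all_algebra.
From mathcomp Require Import zify ring.
Set Implicit Arguments. Unset Strict Implicit. Unset Printing Implicit Defensive.



Lemma e2 n : (2 ^ n + 2 ^ n = 2 ^ n.+1)%N.
Proof. by rewrite expnS mul2n addnn. Qed.

Definition lo n (q : 'I_(2 ^ n)) : 'I_(2 ^ n.+1) := cast_ord (e2 n) (lshift (2 ^ n) q).
Definition hi n (q : 'I_(2 ^ n)) : 'I_(2 ^ n.+1) := cast_ord (e2 n) (rshift (2 ^ n) q).

Lemma val_lo n q : val (@lo n q) = val q. Proof. by []. Qed.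
Lemma val_hi n q : val (@hi n q) = (2 ^ n + q)%N. Proof. by []. Qed.

Lemma lo_inj n : injective (@lo n).
Proof. by move=> a b /(congr1 val) /= /val_inj. Qed.
Lemma hi_inj n : injective (@hi n).
Proof. by move=> a b /(congr1 val) /= /addnI /val_inj. Qed.
Lemma lo_neq_hi n a b : (@lo n a == hi b) = false.
Proof. apply/negbTE; rewrite -val_eqE /=; have := ltn_ord a; lia. Qed.
Lemma hi_neq_lo n a b : (@hi n a == lo b) = false.
Proof. by rewrite eq_sym lo_neq_hi. Qed.

Variant lohi_spec n : 'I_(2 ^ n.+1) -> Type :=
 | LoSpec q : lohi_spec (@lo n q)
 | HiSpec q : lohi_spec (@hi n q).

Lemma lohiP n (p : 'I_(2 ^ n.+1)) : lohi_spec p.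
Proof.
case: (splitP (cast_ord (esym (e2 n)) p)) => [j|k] /= Hj.
  have -> : p = lo j by apply: val_inj; rewrite /= -Hj.
  exact: LoSpec.
have -> : p = hi k by apply: val_inj; rewrite /= -Hj.
exact: HiSpec.
Qed.

Lemma split_big (R : Type) (idx : R) (op : Monoid.com_law idx) n (F : 'I_(2 ^ n.+1) -> R) :
  \big[op/idx]_(p < 2 ^ n.+1) F p =
  op (\big[op/idx]_(q < 2 ^ n) F (lo q)) (\big[op/idx]_(q < 2 ^ n) F (hi q)).
Proof.
rewrite (reindex (cast_ord (e2 n))) /=; last first.
  by exists (cast_ord (esym (e2 n))) => x _; rewrite ?cast_ordK ?cast_ordKV.
by rewrite big_split_ord.
Qed.


Lemma divhi n (a : 'I_(2 ^ n)) : ((2 ^ n + a) %/ 2 ^ n = 1)%N.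
Proof. by rewrite (divnDl _ (dvdnn _)) divnn expn_gt0 /= divn_small. Qed.
Lemma modhi n (a : 'I_(2 ^ n)) : ((2 ^ n + a) %% 2 ^ n = a)%N.
Proof. by rewrite modnDl modn_small. Qed.

Lemma kron_lolo n a b : kronG n.+1 (@lo n a) (@lo n b) = kronG n a b.
Proof. by rewrite /= !divn_small ?modn_small. Qed.
Lemma kron_lohi n a b : kronG n.+1 (@lo n a) (@hi n b) = false.
Proof. by rewrite /= divhi divn_small. Qed.
Lemma kron_hilo n a b : kronG n.+1 (@hi n a) (@lo n b) = kronG n a b.
Proof. by rewrite /= divhi modhi divn_small // modn_small. Qed.
Lemma kron_hihi n a b : kronG n.+1 (@hi n a) (@hi n b) = kronG n a b.
Proof. by rewrite /= !divhi !modhi. Qed.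
Definition kronE := (kron_lolo, kron_lohi, kron_hilo, kron_hihi).

Lemma cardS (T : finType) (b : pred T) : #|[set x | b x]| = (\sum_x b x)%N.
Proof.
rewrite -sum1_card big_mkcond /=; apply: eq_bigr => x _; rewrite inE; by case: (b x).
Qed.

Definition lset n (P : {set 'I_(2 ^ n.+1)}) : {set 'I_(2 ^ n)} := [set q | lo q \in P].
Definition hset n (P : {set 'I_(2 ^ n.+1)}) : {set 'I_(2 ^ n)} := [set q | hi q \in P].
Definition join n (Q0 Q1 : {set 'I_(2 ^ n)}) : {set 'I_(2 ^ n.+1)} :=
  (@lo n @: Q0) :|: (@hi n @: Q1).

Lemma in_join_lo n Q0 Q1 q : (@lo n q \in join Q0 Q1) = (q \in Q0).
Proof.
rewrite /join inE mem_imset; last exact: lo_inj.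
case: (q \in Q0) => //=; apply/negbTE/imsetP => -[x _ /eqP]; by rewrite lo_neq_hi.
Qed.
Lemma in_join_hi n Q0 Q1 q : (@hi n q \in join Q0 Q1) = (q \in Q1).
Proof.
rewrite /join inE (mem_imset _ _ (@hi_inj n)) orbC.
case: (q \in Q1) => //=; apply/negbTE/imsetP => -[x _ /eqP]; by rewrite hi_neq_lo.
Qed.
Lemma join_split n (P : {set 'I_(2 ^ n.+1)}) : join (lset P) (hset P) = P.
Proof.
apply/setP => p; case: (lohiP p) => q; by rewrite ?in_join_lo ?in_join_hi inE.
Qed.
Lemma lset_join n Q0 Q1 : lset (@join n Q0 Q1) = Q0.
Proof. by apply/setP => q; rewrite inE in_join_lo. Qed.
Lemma hset_join n Q0 Q1 : hset (@join n Q0 Q1) = Q1.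
Proof. by apply/setP => q; rewrite inE in_join_hi. Qed.

Lemma sum_sets (R : Type) (idx : R) (op : Monoid.com_law idx) n (F : {set 'I_(2 ^ n.+1)} -> R) :
  \big[op/idx]_(P : {set 'I_(2 ^ n.+1)}) F P =
  \big[op/idx]_(Q0 : {set 'I_(2 ^ n)}) \big[op/idx]_(Q1 : {set 'I_(2 ^ n)}) F (join Q0 Q1).
Proof.
rewrite pair_bigA (reindex (fun Q => join Q.1 Q.2)) //.
exists (fun P => (lset P, hset P)) => [[Q0 Q1]|P] _ /=.
  by rewrite lset_join hset_join.
by rewrite join_split.
Qed.

Lemma card_filter_split n (P : {set 'I_(2 ^ n.+1)}) (f : pred 'I_(2 ^ n.+1)) :
  #|[set p in P | f p]| =
  (#|[set q in lset P | f (lo q)]| + #|[set q in hset P | f (hi q)]|)%N.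
Proof.
rewrite !cardS split_big; congr (_ + _)%N; apply: eq_bigr => q _; by rewrite inE.
Qed.

Lemma card_split n (P : {set 'I_(2 ^ n.+1)}) : #|P| = (#|lset P| + #|hset P|)%N.
Proof.
have := card_filter_split P predT.
have E : forall (T : finType) (A : {set T}), [set x in A | predT x] = A.
  by move=> T A; apply/setP => x; rewrite inE andbT.
by rewrite !E.
Qed.

Definition par n (P : {set 'I_(2 ^ n)}) (k : 'I_(2 ^ n)) : bool :=
  odd #|[set p in P | kronG n p k]|.

Lemma par_lo n (P : {set 'I_(2 ^ n.+1)}) k :
  par P (lo k) = par (lset P) k (+) par (hset P) k.
Proof.
rewrite /par card_filter_split oddD.
have E1 : [set q in lset P | kronG n.+1 (lo q) (lo k)] = [set q in lset P | kronG n q k].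
  by apply/setP => q; rewrite !inE kronE.
have E2 : [set q in hset P | kronG n.+1 (hi q) (lo k)] = [set q in hset P | kronG n q k].
  by apply/setP => q; rewrite !inE kronE.
by rewrite E1 E2.
Qed.

Lemma par_hi n (P : {set 'I_(2 ^ n.+1)}) k :
  par P (hi k) = par (hset P) k.
Proof.
rewrite /par card_filter_split.
have E1 : [set q in lset P | kronG n.+1 (lo q) (hi k)] = set0.
  by apply/setP => q; rewrite !inE kronE andbF.
have E2 : [set q in hset P | kronG n.+1 (hi q) (hi k)] = [set q in hset P | kronG n q k].
  by apply/setP => q; rewrite !inE kronE.
by rewrite E1 E2 cards0.
Qed.

Definition sd (T : finType) (A B : {set T}) : {set T} := (A :\: B) :|: (B :\: A).

Lemma card_sd_f (T : finType) (A B : {set T}) (f : pred T) :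
  (#|[set x in A | f x]| + #|[set x in B | f x]| =
   #|[set x in sd A B | f x]| + 2 * #|[set x in A :&: B | f x]|)%N.
Proof.
rewrite !cardS -!big_split /= big_distrr /= -big_split /=; apply: eq_bigr => x _.
rewrite !inE; by case: (x \in A); case: (x \in B); case: (f x).
Qed.

Lemma card_sd (T : finType) (A B : {set T}) :
  (#|A| + #|B| = #|sd A B| + 2 * #|A :&: B|)%N.
Proof.
have := card_sd_f A B predT.
have E : forall (A : {set T}), [set x in A | predT x] = A.
  by move=> C; apply/setP => x; rewrite inE andbT.
by rewrite !E.
Qed.

Lemma par_sd n (A B : {set 'I_(2 ^ n)}) k : par (sd A B) k = par A k (+) par B k.
Proof.
rewrite /par -oddD card_sd_f oddD oddM /=; by case: odd.
Qed.

Lemma sdK (T : finType) (A B : {set T}) : sd A (sd A B) = B.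
Proof. apply/setP => x; rewrite !inE; by case: (x \in A); case: (x \in B). Qed.
Lemma sd_set0 (T : finType) (A B : {set T}) : (sd A B == set0) = (A == B).
Proof.
apply/eqP/eqP => [H|->]; last by apply/setP => x; rewrite !inE; case: (x \in B).
apply/setP => x; have := congr1 (fun S : {set T} => x \in S) H; rewrite /= !inE.
by case: (x \in A); case: (x \in B).
Qed.


Definition Cond n (i : nat) (P : {set 'I_(2 ^ n)}) : bool :=
  [forall k : 'I_(2 ^ n), (val k <= i)%N ==> (par P k == (val k == i))].

Arguments Cond : clear implicits.

Lemma forall_split n (f : pred 'I_(2 ^ n.+1)) :
  [forall k, f k] = [forall q, f (lo q)] && [forall q, f (hi q)].
Proof.
apply/forallP/andP => [H|[/forallP H0 /forallP H1] p].
  by split; apply/forallP => q; apply: H.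
by case: (lohiP p).
Qed.

Lemma par_set0 n k : @par n set0 k = false.
Proof.
rewrite /par; have -> : [set p in (set0 : {set 'I_(2 ^ n)}) | kronG n p k] = set0.
  by apply/setP => x; rewrite !inE.
by rewrite cards0.
Qed.

Lemma par0_set0 n (R : {set 'I_(2 ^ n)}) : (forall k, par R k = false) -> R = set0.
Proof.
elim: n R => [|n IH] R H.
  pose k0 : 'I_(2 ^ 0) := Ordinal (isT : (0 < 2 ^ 0)%N).
  have := H k0; rewrite /par.
  have -> : [set p in R | kronG 0 p k0] = R by apply/setP => x; rewrite !inE andbT.
  have := max_card R; rewrite card_ord.
  case E : #|R| => [|[|//]] _ //; by move=> _; apply/eqP; rewrite -cards_eq0 E.
have H1 : hset R = set0 by apply: IH => k; rewrite -par_hi.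
have H0 : lset R = set0.
  by apply: IH => k; have := par_lo R k; rewrite H1 par_set0 addbF H.
apply/setP => p; case: (lohiP p) => q; rewrite inE.
  by move: (congr1 (fun S : {set _} => q \in S) H0); rewrite !inE.
by move: (congr1 (fun S : {set _} => q \in S) H1); rewrite !inE.
Qed.

Lemma Cond_lo n (i : 'I_(2 ^ n)) Q0 Q1 :
  Cond n.+1 (lo i) (join Q0 Q1) = Cond n i (sd Q0 Q1).
Proof.
rewrite /Cond forall_split.
have -> : [forall q, (val (hi q) <= val (lo i))%N ==>
   (par (join Q0 Q1) (hi q) == (val (hi q) == val (lo i)))] = true.
  apply/forallP => q; rewrite val_hi val_lo.
  by rewrite leqNgt (leq_trans (ltn_ord i) (leq_addr _ _)).
rewrite andbT; apply: eq_forallb => q.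
by rewrite par_lo lset_join hset_join par_sd.
Qed.

Lemma Cond_hi n (i : 'I_(2 ^ n)) Q0 Q1 :
  Cond n.+1 (hi i) (join Q0 Q1) = (Q0 == Q1) && Cond n i Q1.
Proof.
rewrite /Cond forall_split; congr andb.
  apply/forallP/idP => [H|/eqP -> q].
    rewrite -sd_set0; apply/eqP; apply: par0_set0 => k.
    have := H k.
    have -> : (val (lo k) <= hi i)%N by rewrite /= (leq_trans (ltnW (ltn_ord k)) (leq_addr _ _)).
    have -> : (val (lo k) == hi i) = false.
      by rewrite /= (ltn_eqF (leq_trans (ltn_ord k) (leq_addr _ _))).
    by rewrite /= par_lo lset_join hset_join par_sd => /eqP.
  have -> : (val (lo q) <= hi i)%N by rewrite /= (leq_trans (ltnW (ltn_ord q)) (leq_addr _ _)).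
  have -> : (val (lo q) == hi i) = false.
    by rewrite /= (ltn_eqF (leq_trans (ltn_ord q) (leq_addr _ _))).
  rewrite /= par_lo lset_join hset_join; by case: par.
apply: eq_forallb => q.
rewrite par_hi hset_join.
have -> : (val (hi q) <= hi i)%N = (q <= i)%N by rewrite /= leq_add2l.
have -> : (val (hi q) == hi i) = (val q == i) by rewrite /= eqn_add2l.
by [].
Qed.

Lemma card_join n (Q0 Q1 : {set 'I_(2 ^ n)}) : #|join Q0 Q1| = (#|Q0| + #|Q1|)%N.
Proof. by rewrite card_split lset_join hset_join. Qed.

Definition pop m i := (\sum_(t < m) bit t i)%N.
Definition Lf m i := (\sum_(t < m) (~~ bit t i) * 2 ^ pop t i)%N.

Lemma pop_eq m x y : (forall t, (t < m)%N -> bit t x = bit t y) -> pop m x = pop m y.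
Proof. by move=> H; apply: eq_bigr => t _; rewrite H. Qed.

Lemma Lf_eq m x y : (forall t, (t < m)%N -> bit t x = bit t y) -> Lf m x = Lf m y.
Proof.
move=> H; apply: eq_bigr => t _; rewrite H // (@pop_eq t x y) // => s hs.
by apply: H; apply: ltn_trans hs _.
Qed.

Lemma popS m x : pop m.+1 x = (pop m x + bit m x)%N.
Proof. by rewrite /pop big_ord_recr. Qed.
Lemma LfS m x : Lf m.+1 x = (Lf m x + (~~ bit m x) * 2 ^ pop m x)%N.
Proof. by rewrite /Lf big_ord_recr. Qed.

Lemma bit_small n (q : 'I_(2 ^ n)) : bit n q = false.
Proof. by rewrite /bit divn_small. Qed.
Lemma bit_hitop n (q : 'I_(2 ^ n)) : bit n (2 ^ n + q) = true.
Proof. by rewrite /bit divhi. Qed.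
Lemma bit_hi n (q : 'I_(2 ^ n)) t : (t < n)%N -> bit t (2 ^ n + q) = bit t q.
Proof.
move=> ht; rewrite /bit divnDl; last by rewrite dvdn_exp2l // ltnW.
have -> : (2 ^ n %/ 2 ^ t = 2 ^ (n - t))%N.
  by rewrite -{1}(subnK (ltnW ht)) expnD mulnK // expn_gt0.
rewrite oddD oddX /=.
by have -> : (n - t == 0) = false by apply/negbTE; rewrite subn_eq0 -ltnNge.
Qed.

Lemma pop_lo n (q : 'I_(2 ^ n)) : pop n.+1 (lo q) = pop n q.
Proof. by rewrite popS val_lo bit_small addn0. Qed.
Lemma pop_hi n (q : 'I_(2 ^ n)) : pop n.+1 (hi q) = (pop n q).+1.
Proof. by rewrite popS val_hi bit_hitop addn1 (pop_eq (bit_hi q)). Qed.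
Lemma Lf_lo n (q : 'I_(2 ^ n)) : Lf n.+1 (lo q) = (Lf n q + 2 ^ pop n q)%N.
Proof. by rewrite LfS val_lo bit_small mul1n. Qed.
Lemma Lf_hi n (q : 'I_(2 ^ n)) : Lf n.+1 (hi q) = Lf n q.
Proof. by rewrite LfS val_hi bit_hitop mul0n addn0 (Lf_eq (bit_hi q)). Qed.


Lemma par0 (P : {set 'I_(2 ^ 0)}) k : par P k = odd #|P|.
Proof.
rewrite /par; have -> : [set p in P | kronG 0 p k] = P.
  by apply/setP => x; rewrite !inE andbT.
by [].
Qed.

Lemma MW n (i : 'I_(2 ^ n)) (P : {set 'I_(2 ^ n)}) :
  Cond n i P -> (2 ^ pop n i <= #|P|)%N.
Proof.
elim: n i P => [|n IH] i P.
  move=> /forallP /(_ i); rewrite leqnn eqxx /= par0 => /eqP H.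
  have -> : pop 0 i = 0%N by rewrite /pop big_ord0.
  by move: H; case: #|P|.
rewrite -(join_split P); case: (lohiP i) => q.
  rewrite Cond_lo card_join pop_lo => /IH H.
  apply: (leq_trans H); rewrite card_sd; exact: leq_addr.
rewrite Cond_hi card_join pop_hi expnS => /andP[/eqP -> /IH H].
by rewrite mul2n -addnn leq_add.
Qed.


Definition cnt n (i : nat) (w : nat) : nat :=
  (\sum_(P : {set 'I_(2 ^ n)}) (Cond n i P && (#|P| == w)))%N.

Lemma card_sd2 (T : finType) (Q R : {set T}) :
  (#|Q| + #|sd Q R| = #|R| + 2 * #|Q :\: R|)%N.
Proof.
have := card_sd Q R; have := cardsID R Q; lia.
Qed.

Lemma Cond0 (i : 'I_(2 ^ 0)) (P : {set 'I_(2 ^ 0)}) : Cond 0 i P = odd #|P|.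
Proof.
apply/forallP/idP => [/(_ i)|H k].
  by rewrite leqnn eqxx /= par0 => /eqP.
have E : val k = val i by have := ltn_ord k; have := ltn_ord i; rewrite /=; lia.
by rewrite E leqnn eqxx /= par0 H.
Qed.

Lemma inner_lo n (q : 'I_(2 ^ n)) d (Q0 : {set 'I_(2 ^ n)}) :
  (\sum_(Q1 : {set 'I_(2 ^ n)}) (Cond n.+1 (lo q) (join Q0 Q1) && (#|join Q0 Q1| == d)) =
  \sum_(R : {set 'I_(2 ^ n)}) (Cond n q R && (#|R| + 2 * #|Q0 :\: R| == d)))%N.
Proof.
rewrite (reindex_inj (can_inj (sdK Q0))); apply: eq_bigr => R _.
by rewrite Cond_lo card_join sdK card_sd2.
Qed.

Lemma inner_lo2 n (q : 'I_(2 ^ n)) (R : {set 'I_(2 ^ n)}) :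
  (\sum_(Q0 : {set 'I_(2 ^ n)}) (Cond n q R && (#|R| + 2 * #|Q0 :\: R| == 2 ^ pop n q)) =
  (Cond n q R && (#|R| == 2 ^ pop n q)) * 2 ^ (2 ^ pop n q))%N.
Proof.
case HC: (Cond n q R); last by rewrite big1.
have HR := MW HC.
case: (eqVneq #|R| (2 ^ pop n q)) => HE; last first.
  rewrite big1 // => Q0 _; apply/eqP; rewrite eqb0; apply/eqP; lia.
rewrite /= mul1n -HE -card_powerset.
have -> : powerset R = [set Q : {set 'I_(2 ^ n)} | Q \subset R].
  by apply/setP => Q; rewrite powersetE ?inE.
rewrite cardS; apply: eq_bigr => Q0 _; rewrite -setD_eq0 -cards_eq0 HE.
by case: #|Q0 :\: R| => [|k] /=; rewrite ?addn0 ?eqxx //; apply/eqP; lia.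
Qed.

Lemma CNT n (i : 'I_(2 ^ n)) : cnt n i (2 ^ pop n i) = (2 ^ Lf n i)%N.
Proof.
elim: n i => [|n IH] i.
  have -> : pop 0 i = 0%N by rewrite /pop big_ord0.
  have -> : Lf 0 i = 0%N by rewrite /Lf big_ord0.
  rewrite /cnt (bigD1 setT) //= Cond0 cardsT card_ord /= big1 // => P HP.
  case: andP => //= -[_ /eqP E].
  move: HP; rewrite eqEcard subsetT /= cardsT card_ord E.
  by [].
rewrite /cnt sum_sets; case: (lohiP i) => q.
  rewrite pop_lo Lf_lo expnD -IH /cnt big_distrl.
  rewrite (eq_bigr _ (fun Q0 _ => inner_lo q _ Q0)) exchange_big.
  by apply: eq_bigr => R _; rewrite inner_lo2.
rewrite pop_hi Lf_hi -IH /cnt exchange_big; apply: eq_bigr => Q1 _.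
rewrite (bigD1 Q1) //= big1 => [|Q0 /negbTE HQ]; last by rewrite Cond_hi HQ.
rewrite Cond_hi eqxx /= card_join addn0 expnS.
have -> : (#|Q1| + #|Q1| == 2 * 2 ^ pop n q) = (#|Q1| == 2 ^ pop n q).
  by apply/eqP/eqP; lia.
by [].
Qed.

Section Core4.
Import GRing.Theory.
Local Open Scope ring_scope.

Lemma F2_cases (x : 'F_2) : x = 0 \/ x = 1.
Proof. case: x => [[|[|m]] Hm]; [left|right|by []]; exact: val_inj. Qed.
Lemma F2_nat m : (m%:R : 'F_2) = (odd m)%:R.
Proof. by rewrite -(Fp_nat_mod (isT : prime 2)) modn2. Qed.
Lemma F2_add (x : 'F_2) : x + x = 0.
Proof. exact: (addrr_pchar2 (pchar_Fp (isT : prime 2))). Qed.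
Lemma b2F_inj (b1 b2 : bool) : (b1%:R : 'F_2) = b2%:R -> b1 = b2.
Proof. by case: b1; case: b2 => //= /eqP; rewrite ?oner_eq0 // eq_sym oner_eq0. Qed.
Lemma natb_mul (b1 b2 : bool) : (b1%:R * b2%:R : 'F_2) = (b1 && b2)%:R.
Proof. by case: b1; case: b2; rewrite /= ?mul1r ?mul0r. Qed.
Lemma b2F_neq0 (b : bool) : ((b%:R : 'F_2) != 0) = b.
Proof. by case: b; rewrite /= ?oner_eq0 ?eqxx. Qed.

Lemma card_row n (i : 'I_(2 ^ n)) :
  #|[set k : 'I_(2 ^ n) | kronG n i k]| = (2 ^ pop n i)%N.
Proof.
elim: n i => [|n IH] i.
  have -> : pop 0 i = 0%N by rewrite /pop big_ord0.
  have -> : [set k : 'I_(2 ^ 0) | kronG 0 i k] = setT by apply/setP => k; rewrite !inE.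
  by rewrite cardsT card_ord.
rewrite card_split; case: (lohiP i) => q.
  have -> : lset [set k : 'I_(2 ^ n.+1) | kronG n.+1 (lo q) k] = [set k : 'I_(2 ^ n) | kronG n q k].
    by apply/setP => k; rewrite !inE kronE.
  have -> : hset [set k : 'I_(2 ^ n.+1) | kronG n.+1 (lo q) k] = set0.
    by apply/setP => k; rewrite !inE kronE.
  by rewrite cards0 addn0 IH pop_lo.
have -> : lset [set k : 'I_(2 ^ n.+1) | kronG n.+1 (hi q) k] = [set k : 'I_(2 ^ n) | kronG n q k].
  by apply/setP => k; rewrite !inE kronE.
have -> : hset [set k : 'I_(2 ^ n.+1) | kronG n.+1 (hi q) k] = [set k : 'I_(2 ^ n) | kronG n q k].
  by apply/setP => k; rewrite !inE kronE.
by rewrite IH pop_hi expnS mul2n addnn.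
Qed.

Lemma hw_grow n (i : 'I_(2 ^ n)) : hw (grow n i) = (2 ^ pop n i)%N.
Proof.
rewrite /hw -card_row.
have -> : [set k : 'I_(2 ^ n) | grow n i 0 k != 0] = [set k : 'I_(2 ^ n) | kronG n i k].
  by apply/setP => k; rewrite !inE mxE b2F_neq0.
by [].
Qed.

Lemma split_sumR (R : nmodType) n (F : 'I_(2 ^ n.+1) -> R) :
  \sum_(p < 2 ^ n.+1) F p = \sum_(q < 2 ^ n) F (lo q) + \sum_(q < 2 ^ n) F (hi q).
Proof. exact: split_big. Qed.

Lemma mob n (q r : 'I_(2 ^ n)) :
  \sum_(k : 'I_(2 ^ n)) ((kronG n k q && kronG n r k)%:R : 'F_2) = (q == r)%:R.
Proof.
elim: n q r => [|n IH] q r.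
  have E : forall a b : 'I_(2 ^ 0), a = b.
    by move=> [[|x] Hx] [[|y] Hy] //; apply: val_inj.
  rewrite (big_pred1 q) => [|k]; last by rewrite (E k q) /= eqxx.
  by rewrite (E r q) eqxx.
rewrite split_sumR.
case: (lohiP q) => a; case: (lohiP r) => b.
- rewrite (inj_eq (@lo_inj n)) -IH; under eq_bigr => k _ do rewrite !kronE.
  under [X in _ + X]eq_bigr => k _ do rewrite !kronE andbF.
  by rewrite [X in _ + X]big1 ?addr0.
- rewrite lo_neq_hi; under eq_bigr => k _ do rewrite !kronE.
  under [X in _ + X]eq_bigr => k _ do rewrite !kronE.
  exact: F2_add.
- rewrite hi_neq_lo; under eq_bigr => k _ do rewrite !kronE.
  under [X in _ + X]eq_bigr => k _ do rewrite !kronE andbF.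
  by rewrite !big1 ?addr0.
- rewrite (inj_eq (@hi_inj n)) -IH; under eq_bigr => k _ do rewrite !kronE.
  under [X in _ + X]eq_bigr => k _ do rewrite !kronE.
  by rewrite big1 ?add0r.
Qed.

End Core4.

Section Core5.
Import GRing.Theory.
Local Open Scope ring_scope.

Definition vecOf n (P : {set 'I_(2 ^ n)}) : 'rV['F_2]_(2 ^ n) := \row_k ((k \in P)%:R).
Definition supp n (v : 'rV['F_2]_(2 ^ n)) : {set 'I_(2 ^ n)} := [set k | v 0 k != 0].
Definition cf n (v : 'rV['F_2]_(2 ^ n)) (k : 'I_(2 ^ n)) : 'F_2 :=
  \sum_(p < 2 ^ n) v 0 p * (kronG n p k)%:R.

Lemma vecOfK n : cancel (@supp n) (@vecOf n).
Proof.
move=> v; apply/rowP => k; rewrite !mxE inE.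
by case: (F2_cases (v 0 k)) => ->; rewrite ?eqxx ?oner_eq0.
Qed.
Lemma suppK n : cancel (@vecOf n) (@supp n).
Proof. by move=> P; apply/setP => k; rewrite inE mxE b2F_neq0. Qed.

Lemma hw_vecOf n (P : {set 'I_(2 ^ n)}) : hw (vecOf P) = #|P|.
Proof. by rewrite /hw -/(supp (vecOf P)) suppK. Qed.

Lemma cf_vecOf n (P : {set 'I_(2 ^ n)}) k : cf (vecOf P) k = (par P k)%:R.
Proof.
rewrite /cf /par -F2_nat cardS natr_sum; apply: eq_bigr => p _.
by rewrite mxE natb_mul ?inE.
Qed.

Lemma cfD n (u v : 'rV['F_2]_(2 ^ n)) k : cf (u + v) k = cf u k + cf v k.
Proof. by rewrite /cf -big_split; apply: eq_bigr => p _; rewrite mxE mulrDl. Qed.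

Lemma cf_sum n (A : {set 'I_(2 ^ n)}) (M : 'I_(2 ^ n) -> 'rV['F_2]_(2 ^ n)) k :
  cf (\sum_(a in A) M a) k = \sum_(a in A) cf (M a) k.
Proof.
rewrite /cf exchange_big; apply: eq_bigr => p _; by rewrite summxE big_distrl.
Qed.

Lemma cf_grow n (a k : 'I_(2 ^ n)) : cf (grow n a) k = (k == a)%:R.
Proof.
rewrite /cf -mob; apply: eq_bigr => p _; by rewrite mxE natb_mul andbC.
Qed.

Lemma coset_char n (i : 'I_(2 ^ n)) (P : {set 'I_(2 ^ n)}) :
  (vecOf P \in coset_i n i) = Cond n i P.
Proof.
apply/imsetP/idP => [[A] | HC].
  rewrite inE => /subsetP HA E.
  apply/forallP => k; apply/implyP => Hk; apply/eqP; apply: b2F_inj.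
  rewrite -cf_vecOf E cfD cf_sum cf_grow big1 ?addr0 //.
  move=> a /HA; rewrite inE => Ha; rewrite cf_grow.
  have -> : (k == a) = false.
    by apply/negbTE; rewrite -val_eqE /= neq_ltn (leq_ltn_trans Hk Ha).
  by [].
exists [set a : 'I_(2 ^ n) | (i < a)%N && par P a].
  by rewrite inE; apply/subsetP => a; rewrite !inE => /andP[].
apply/rowP => q; rewrite !mxE summxE.
under [X in _ = _ + X]eq_bigr => a _ do rewrite mxE.
have Hpar : forall a : 'I_(2 ^ n), (par P a)%:R =
    (a == i)%:R + (a \in [set a : 'I_(2 ^ n) | (i < a)%N && par P a])%:R :> 'F_2.
  move=> a; rewrite inE; case: (leqP a i) => Hai /=.
    move/forallP: HC => /(_ a); rewrite Hai /= => /eqP ->; by rewrite addr0.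
  have -> : (a == i) = false by apply/negbTE; rewrite -val_eqE /= neq_ltn Hai orbT.
  by rewrite add0r.
transitivity (\sum_(a < 2 ^ n) (par P a)%:R * (kronG n a q)%:R : 'F_2).
  under eq_bigr => a _ do rewrite -cf_vecOf /cf big_distrl /=.
  rewrite exchange_big /= (bigD1 q) //= [X in _ + X]big1 ?addr0.
    rewrite mxE; under eq_bigr => a _ do rewrite -mulrA natb_mul andbC.
    by rewrite -big_distrr /= mob eqxx mulr1.
  move=> p Hp; under eq_bigr => a _ do rewrite -mulrA.
  rewrite -big_distrr /=.
  have -> : \sum_(a < 2 ^ n) (kronG n p a)%:R * (kronG n a q)%:R = (0 : 'F_2).
    rewrite -[RHS]/((false : bool)%:R) -(negbTE Hp) eq_sym -mob.
    by apply: eq_bigr => a _; rewrite natb_mul andbC.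
  by rewrite mulr0.
under [X in X = _]eq_bigr => a _ do rewrite Hpar mulrDl.
rewrite big_split /= (bigD1 i) //= eqxx mul1r big1 ?addr0; last first.
  by move=> a /negbTE ->; rewrite mul0r.
congr (_ + _); rewrite [RHS]big_mkcond; apply: eq_bigr => a _.
by case: (a \in _); rewrite ?mul1r ?mul0r.
Qed.

End Core5.


Lemma S_cnt n (i : 'I_(2 ^ n)) w : S_ n i w = cnt n i w.
Proof.
rewrite /S_ cardS /cnt (reindex (@vecOf n)) /=; last first.
  by exists (@supp n) => x _; rewrite ?suppK ?vecOfK.
by apply: eq_bigr => P _; rewrite coset_char hw_vecOf.
Qed.

Lemma s_formula n (i : 'I_(2 ^ n)) : s_ n i = (2 ^ Lf n i)%N.
Proof. by rewrite /s_ hw_grow S_cnt CNT. Qed.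

Lemma bits_eq n x y : (x < 2 ^ n)%N -> (y < 2 ^ n)%N ->
  (forall t, (t < n)%N -> bit t x = bit t y) -> x = y.
Proof.
elim: n x y => [|n IH] x y.
  by rewrite expn0 !ltnS !leqn0 => /eqP -> /eqP ->.
move=> Hx Hy H.
have Hb : forall z t, bit t.+1 z = bit t z./2.
  by move=> z t; rewrite /bit expnS divnMA divn2.
have H0 : odd x = odd y by have := H 0%N isT; rewrite /bit expn0 !divn1.
have Hx2 : (x./2 < 2 ^ n)%N by rewrite -divn2 ltn_divLR // mulnC -expnS.
have Hy2 : (y./2 < 2 ^ n)%N by rewrite -divn2 ltn_divLR // mulnC -expnS.
have E : x./2 = y./2 by apply: IH => // t Ht; rewrite -!Hb; apply: H.
by rewrite -(odd_double_half x) -(odd_double_half y) H0 E.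
Qed.

Section Swap.
Variables (n u w x y : nat).
Hypotheses (Huw : (u < w)%N) (Hwn : (w < n)%N)
  (Heq : forall k, (k < n)%N -> k != u -> k != w -> bit k x = bit k y)
  (Hux : bit u x) (Hwy : bit w y) (Hwx : ~~ bit w x) (Huy : ~~ bit u y).

Lemma pop_swap t : (t <= n)%N -> pop t x = (pop t y + ((u < t) && (t <= w)))%N.
Proof.
elim: t => [|t IH] Ht; first by rewrite /pop !big_ord0.
rewrite !popS IH ?(ltnW Ht) //.
case: (eqVneq t u) => [->|Htu].
  rewrite (negbTE Huy) Hux ltnn ltnSn Huw /=; lia.
case: (eqVneq t w) => [->|Htw].
  rewrite (negbTE Hwx) Hwy Huw leqnn ltnS (ltnW Huw) ltnn /=; lia.
rewrite (Heq Ht Htu Htw).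
have -> : (u < t.+1)%N = (u < t)%N by rewrite ltnS leq_eqVlt eq_sym (negbTE Htu).
have -> : (t.+1 <= w)%N = (t <= w)%N by rewrite ltn_neqAle Htw.
lia.
Qed.

Lemma pop_mono z a b : (a <= b)%N -> (pop a z <= pop b z)%N.
Proof.
move=> /subnK <-; elim: (b - a)%N => [|k IH] //=.
by rewrite addSn popS (leq_trans IH) ?leq_addr.
Qed.

Lemma swap_pop : pop n x = pop n y.
Proof. rewrite pop_swap //; have -> : (n <= w)%N = false by lia. by rewrite andbF addn0. Qed.

Lemma swap_Lf : (Lf n y < Lf n x)%N.
Proof.
set tx := fun t => ((~~ bit t x) * 2 ^ pop t x)%N.
set ty := fun t => ((~~ bit t y) * 2 ^ pop t y)%N.
have Hpt : forall t : 'I_n, (ty t + ((t : nat) == w) * tx w <= tx t + ((t : nat) == u) * ty u)%N.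
  move=> t; rewrite /tx /ty.
  case: (eqVneq (t : nat) u) => [->|Htu].
    rewrite (negbTE Huy) Hux /= (_ : (u == w) = false); last by lia.
    rewrite /=; lia.
  case: (eqVneq (t : nat) w) => [->|Htw].
    rewrite (negbTE Hwx) Hwy /=; lia.
  rewrite (Heq (ltn_ord t) Htu Htw) /= !mul0n !addn0 leq_mul2l.
  by rewrite leq_exp2l // (@pop_swap t) ?leq_addr ?orbT // ltnW.
have Hsum : (\sum_(t < n) (ty t + ((t : nat) == w) * tx w) <=
              \sum_(t < n) (tx t + ((t : nat) == u) * ty u))%N.
  by apply: leq_sum => t _; exact: Hpt.
rewrite !big_split /= in Hsum.
have Hind : forall c v, (v < n)%N -> (\sum_(t < n) ((t : nat) == v) * c = c)%N.
  move=> c v Hv; rewrite (bigD1 (Ordinal Hv)) //= eqxx mul1n big1 ?addn0 //.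
  move=> t Ht; rewrite (_ : ((t : nat) == v) = false) //; apply/negbTE.
  by apply: contra Ht => /eqP E; apply/eqP/val_inj.
rewrite !Hind // in Hsum; last exact: ltn_trans Huw Hwn.
have Hlt : (ty u < tx w)%N.
  rewrite /tx /ty (negbTE Huy) Hwx /= !mul1n ltn_exp2l // pop_swap ?(ltnW Hwn) //.
  rewrite Huw leqnn /= addn1 ltnS.
  have -> : pop u y = pop u x.
    by rewrite (@pop_swap u) ?ltnn ?addn0 // ltnW // (ltn_trans Huw Hwn).
  rewrite (@pop_swap u) ?ltnn ?addn0 ?(ltnW (ltn_trans Huw Hwn)) //.
  exact: pop_mono (ltnW Huw).
rewrite /Lf -(ltn_add2r (tx w)); apply: (leq_ltn_trans Hsum); by rewrite ltn_add2l.
Qed.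
End Swap.


Lemma step_lemma n x y : step n x y ->
  (pop n x <= pop n y)%N /\
  (pop n x = pop n y -> (Lf n y < Lf n x)%N \/ (forall t, (t < n)%N -> bit t y = bit t x)).
Proof.
case => [[u [w [/andP [Huw Hwn] Heq /andP[Hux Hwy] /andP[Hwx Huy]]]] | H].
  rewrite (swap_pop Huw Hwn Heq Hux Hwy Hwx Huy); split => // _; left.
  exact: (swap_Lf Huw Hwn Heq Hux Hwy Hwx Huy).
split; first by apply: leq_sum => t _; apply: H.
move=> Hp; right => t Ht; apply/eqP; apply/negP => Hne.
have Hx : bit t x = false by move: (H t Ht) Hne; case: bit; case: bit.
have Hy : bit t y = true by move: (H t Ht) Hne; case: bit; case: bit.
have : (pop n x < pop n y)%N.
  rewrite /pop (bigD1 (Ordinal Ht)) //= [X in (_ < X)%N](bigD1 (Ordinal Ht)) //= Hx Hy.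
  by rewrite add0n add1n ltnS; apply: leq_sum => s _; apply: H.
by rewrite Hp ltnn.
Qed.

Lemma chain n i (a : seq nat) :
  (forall m, (m < size a)%N -> step n (nth 0%N (i :: a) m) (nth 0%N (i :: a) m.+1)) ->
  forall m, (m <= size a)%N ->
  (pop n i <= pop n (nth 0%N (i :: a) m))%N /\
  (pop n (nth 0%N (i :: a) m) = pop n i ->
     (Lf n (nth 0%N (i :: a) m) < Lf n i)%N \/
     (forall t, (t < n)%N -> bit t (nth 0%N (i :: a) m) = bit t i)).
Proof.
move=> Hs; elim => [|m IH] Hm.
  by split => // _; right.
have [IH1 IH2] := IH (ltnW Hm).
have [S1 S2] := step_lemma (Hs m Hm).
split; first exact: leq_trans IH1 S1.
move=> Heq.
have Hpm : pop n (nth 0%N (i :: a) m) = pop n i by apply/eqP; rewrite eqn_leq IH1 -Heq S1.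
have := S2 (etrans Hpm (esym Heq)); case: (IH2 Hpm) => [HL|HB] [HL'|HB'].
- by left; exact: ltn_trans HL' HL.
- by left; rewrite (Lf_eq HB'); exact: HL.
- by left; rewrite -(Lf_eq HB); exact: HL'.
- by right => t Ht; rewrite HB' // HB.
Qed.

Theorem theorem4 (n i j : nat) (hij : (i < j)%N) (hjN : (j < 2 ^ n)%N)
  (hseq : exists a : seq nat,
      [/\ all (fun x => (x < 2 ^ n)%N) a,
          last i a = j &
          forall m, (m < size a)%N -> step n (nth 0%N (i :: a) m) (nth 0%N (i :: a) m.+1)]) :
  let A := (hw (grow n i) < hw (grow n j))%N in
  let B := (hw (grow n j) = hw (grow n i)) /\ (s_ n j < s_ n i)%N in
  (A \/ B) /\ ~ (A /\ B).
Proof.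
have hiN : (i < 2 ^ n)%N := ltn_trans hij hjN.
have Hwi := hw_grow (Ordinal hiN); have Hwj := hw_grow (Ordinal hjN).
have Hsi := s_formula (Ordinal hiN); have Hsj := s_formula (Ordinal hjN).
simpl in Hwi, Hwj, Hsi, Hsj.
rewrite /= Hwi Hwj Hsi Hsj.
case: hseq => a [_ Hlast Hs].
have := chain Hs (leqnn (size a)).
have -> : nth 0%N (i :: a) (size a) = j.
  by rewrite -Hlast -[size a]/((size (i :: a)).-1) nth_last.
case => H1 H2.
case: (ltngtP (pop n i) (pop n j)) => Hp.
- split; first by left; rewrite ltn_exp2l.
  case => _ [E _]; move/eqP: E; rewrite eqn_exp2l // => /eqP E.
  by move: Hp; rewrite E ltnn.
- by move: (leq_ltn_trans H1 Hp); rewrite ltnn.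
case: (H2 (esym Hp)) => [HL|HB]; last first.
  by move: hij; rewrite (bits_eq hjN hiN HB) ltnn.
split; first by right; rewrite Hp; split => //; rewrite ltn_exp2l.
by case; rewrite Hp ltnn.
Qed.
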